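(* Let $N\ge3$ and for $1\le k<N/2$ let $s_k=\tan(k\pi/N)$. Then every $s_k$ with $1\le k<N/2$ and $\gcd(k,N)>1$ can be written as a $\mathbb{Q}$-linear combination of the $s_j$ with $1\le j<N/2$ and $\gcd(j,N)=1$.
   Context: The $s_k$ with $\gcd(k,N)=1$ are called primitive star points and those with $\gcd(k,N)>1$ degenerate star points of the regular $N$-gon. *)

(* Defs.v *)
From Stdlib Require Import Reals QArith Qreals Arith.
Open Scope R_scope.

Definition star_point (N k : nat) : R := tan (INR k * PI / INR N).

Definition primitive_idx (N j : nat) : bool :=
  (1 <=? j)%nat && (2 * j <? N)%nat && (Nat.gcd j N =? 1)%nat.

(* Main.v *)
Require Import Defs.
From Stdlib Require Import Reals QArith Qreals Arith.
From Stdlib Require Import Lra Lia ZArith Znumtheory List Classical.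
From Coquelicot Require Import Coquelicot.
Open Scope R_scope.


Fixpoint csum (n : nat) (f : nat -> C) : C :=
  match n with O => RtoC 0 | S n => Cplus (csum n f) (f n) end.

Lemma csum_ext n f g : (forall i, (i < n)%nat -> f i = g i) -> csum n f = csum n g.
Proof. induction n; intros H; simpl; auto. rewrite IHn by (intros; apply H; lia). rewrite H by lia. auto. Qed.

Lemma csum_plus n f g : csum n (fun i => Cplus (f i) (g i)) = Cplus (csum n f) (csum n g).
Proof. induction n; simpl. ring. rewrite IHn. ring. Qed.

Lemma csum_scal n c f : csum n (fun i => Cmult c (f i)) = Cmult c (csum n f).
Proof. induction n; simpl. ring. rewrite IHn. ring. Qed.

Lemma csum_swap n m (f : nat -> nat -> C) :
  csum n (fun i => csum m (fun j => f i j)) = csum m (fun j => csum n (fun i => f i j)).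
Proof.
  induction n; simpl.
  - induction m; simpl; auto. rewrite <- IHm. ring.
  - rewrite IHn. rewrite <- csum_plus. auto.
Qed.

Lemma csum_const n c : csum n (fun _ => c) = Cmult (RtoC (INR n)) c.
Proof. induction n; cbn [csum]. unfold RtoC. apply injective_projections; simpl; ring.
  rewrite IHn. rewrite S_INR. unfold RtoC. apply injective_projections; simpl; ring. Qed.

Lemma csum_first n f : csum (S n) f = Cplus (f O) (csum n (fun i => f (S i))).
Proof. induction n; simpl in *. ring. rewrite IHn. ring. Qed.

Lemma geom (z : C) n : Cmult (Cminus z 1) (csum n (fun i => Cpow z i)) = Cminus (Cpow z n) 1.
Proof. induction n; simpl. ring. rewrite Cmult_plus_distr_l, IHn. ring. Qed.

Definition ex (t : R) : C := (cos t, sin t).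

Lemma ex_add a b : ex (a + b) = Cmult (ex a) (ex b).
Proof. unfold ex, Cmult; simpl. rewrite cos_plus, sin_plus. apply injective_projections; simpl; ring. Qed.

Lemma ex_pow t n : Cpow (ex t) n = ex (INR n * t).
Proof. induction n; simpl Cpow. unfold ex. rewrite Rmult_0_l, cos_0, sin_0. auto.
  rewrite IHn, <- ex_add, S_INR. f_equal; ring. Qed.

Lemma ex_0 : ex 0 = RtoC 1.
Proof. unfold ex. rewrite cos_0, sin_0. auto. Qed.

Lemma ex_PI t : ex (t + PI) = Copp (ex t).
Proof. unfold ex. rewrite neg_cos, neg_sin. auto. Qed.

Lemma ex_period t k : ex (t + 2 * INR k * PI) = ex t.
Proof. unfold ex. rewrite cos_period, sin_period. auto. Qed.


Lemma ex_ne1 p k : (0 < k < p)%nat -> ex (INR k * (2 * PI / INR p)) <> RtoC 1.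
Proof.
  intros Hk E. unfold ex, RtoC in E. injection E as Ec Es.
  set (x := INR k * PI / INR p).
  assert (Hx: INR k * (2 * PI / INR p) = 2 * x) by (unfold x; field; apply not_0_INR; lia).
  rewrite Hx in Ec. rewrite cos_2a_sin in Ec.
  assert (Hs: sin x = 0) by nra.
  apply sin_eq_0_0 in Hs. destruct Hs as [j Hj]. unfold x in Hj.
  assert (INR k = IZR j * INR p).
  { apply Rmult_eq_reg_r with (PI / INR p). 2: { apply Rmult_integral_contrapositive; split. apply PI_neq0. apply Rinv_neq_0_compat, not_0_INR; lia. }
    transitivity (INR k * PI / INR p). field; apply not_0_INR; lia. rewrite Hj. field; apply not_0_INR; lia. }
  rewrite !INR_IZR_INZ, <- mult_IZR in H. apply eq_IZR in H. destruct (Z_le_gt_dec j 0); nia.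
Qed.

Lemma ex_p_1 p k : (0 < p)%nat -> Cpow (ex (INR k * (2 * PI / INR p))) p = RtoC 1.
Proof.
  intros Hp. rewrite ex_pow.
  replace (INR p * (INR k * (2 * PI / INR p))) with (0 + 2 * INR k * PI) by (field; apply not_0_INR; lia).
  rewrite ex_period, ex_0. auto.
Qed.

Lemma sum_roots p k : (0 < k < p)%nat ->
  csum p (fun m => Cpow (ex (INR k * (2 * PI / INR p))) m) = RtoC 0.
Proof.
  intros Hk. set (z := ex _).
  assert (G := geom z p). unfold z in G at 3. rewrite ex_p_1 in G by lia.
  replace (Cminus 1 1) with (RtoC 0) in G by ring.
  assert (Hz: Cminus z 1 <> RtoC 0).
  { intro E. apply (ex_ne1 p k Hk). fold z. apply (f_equal (fun w => Cplus w 1)) in E.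
    replace z with (Cplus (Cminus z 1) 1) by ring. rewrite E. ring. }
  transitivity (Cmult (Cinv (Cminus z 1)) (Cmult (Cminus z 1) (csum p (fun m => Cpow z m)))).
  field. auto. rewrite G. ring.
Qed.


Lemma inv_expand q th m (p := (2*q+1)%nat) :
  Cplus 1 (ex (INR p * th)) <> RtoC 0 ->
  Cplus 1 (ex (th + INR m * (2 * PI / INR p))) <> RtoC 0 ->
  Cinv (Cplus 1 (ex (th + INR m * (2 * PI / INR p)))) =
  Cdiv (csum p (fun k => Cmult (ex (INR k * (th + PI))) (Cpow (ex (INR k * (2 * PI / INR p))) m)))
       (Cplus 1 (ex (INR p * th))).
Proof.
  intros H1 H2.
  set (v := ex (th + INR m * (2 * PI / INR p))).
  assert (Hp : INR p <> 0) by (apply not_0_INR; unfold p; lia).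
  assert (HS : csum p (fun k => Cmult (ex (INR k * (th + PI))) (Cpow (ex (INR k * (2 * PI / INR p))) m))
             = csum p (fun k => Cpow (Copp v) k)).
  { apply csum_ext. intros k _. unfold v. rewrite <- ex_PI, !ex_pow, <- ex_add. f_equal. ring. }
  rewrite HS.
  assert (G := geom (Copp v) p).
  assert (Hv : Cpow (Copp v) p = Copp (ex (INR p * th))).
  { unfold v. rewrite <- ex_PI, ex_pow.
    replace (INR p * (th + INR m * (2 * PI / INR p) + PI)) with ((INR p * th + 2 * INR (m + q) * PI) + PI).
    rewrite ex_PI, ex_period. auto.
    unfold p. rewrite plus_INR, mult_INR, plus_INR. simpl INR. field.
    unfold p in Hp. rewrite plus_INR, mult_INR in Hp. simpl INR in Hp. auto. }
  rewrite Hv in G.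
  assert (E : Cmult (Cplus 1 v) (csum p (fun k => Cpow (Copp v) k)) = Cplus 1 (ex (INR p * th))).
  { transitivity (Copp (Cmult (Cminus (Copp v) 1) (csum p (fun k => Cpow (Copp v) k)))). ring.
    rewrite G. ring. }
  assert (S: csum p (fun k => Cpow (Copp v) k) = Cmult (Cinv (Cplus 1 v)) (Cplus 1 (ex (INR p * th)))).
  { rewrite <- E. field. auto. }
  rewrite S. field. split; auto.
Qed.


Lemma csum_zero n f : (forall i, (i < n)%nat -> f i = RtoC 0) -> csum n f = RtoC 0.
Proof. intros H. rewrite (csum_ext n f (fun _ => RtoC 0)) by auto. rewrite csum_const. ring. Qed.

Lemma csum_first' n f : (0 < n)%nat -> csum n f = Cplus (f O) (csum (n - 1) (fun i => f (S i))).
Proof. intros H. destruct n. lia. rewrite csum_first. f_equal. f_equal. lia. Qed.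

Lemma sum_inv q th (p := (2*q+1)%nat) :
  Cplus 1 (ex (INR p * th)) <> RtoC 0 ->
  (forall m, (m < p)%nat -> Cplus 1 (ex (th + INR m * (2 * PI / INR p))) <> RtoC 0) ->
  csum p (fun m => Cinv (Cplus 1 (ex (th + INR m * (2 * PI / INR p))))) =
  Cdiv (RtoC (INR p)) (Cplus 1 (ex (INR p * th))).
Proof.
  intros H1 H2.
  rewrite (csum_ext _ _ (fun m => Cmult (Cinv (Cplus 1 (ex (INR p * th))))
     (csum p (fun k => Cmult (ex (INR k * (th + PI))) (Cpow (ex (INR k * (2 * PI / INR p))) m))))).
  2: { intros m Hm. unfold p. rewrite inv_expand; auto. unfold Cdiv. ring. }
  rewrite csum_scal, csum_swap.
  rewrite (csum_ext _ _ (fun k => Cmult (ex (INR k * (th + PI))) (csum p (fun m => Cpow (ex (INR k * (2 * PI / INR p))) m)))).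
  2: { intros k _. rewrite csum_scal. auto. }
  rewrite (csum_first' p) by (unfold p; lia).
  rewrite (csum_zero (p - 1)). 2: { intros i Hi. rewrite sum_roots. ring. lia. }
  simpl INR at 1 2. rewrite !Rmult_0_l, ex_0.
  rewrite (csum_ext _ _ (fun _ => RtoC 1)). 2: { intros. clear. induction i; simpl; auto. rewrite IHi. ring. }
  rewrite csum_const. unfold Cdiv. ring.
Qed.

Fixpoint rsum (n : nat) (f : nat -> R) : R :=
  match n with O => 0 | S n => rsum n f + f n end.

Lemma csum_im n f : csum n (fun m => (0, f m)) = (0, rsum n f).
Proof. induction n; cbn [csum rsum]. auto. rewrite IHn. unfold Cplus. simpl. f_equal; ring. Qed.

Lemma div_fact (z D X : C) : D <> RtoC 0 -> Cmult z D = X -> z = Cdiv X D.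
Proof. intros H E. rewrite <- E. field. auto. Qed.

Lemma frac_fact (w : C) : Cplus 1 w <> RtoC 0 -> Cdiv (Cminus w 1) (Cplus 1 w) = Cminus 1 (Cmult 2 (Cinv (Cplus 1 w))).
Proof. intros H. field. auto. Qed.

Lemma tanC y : cos y <> 0 -> (0, tan y) = Cminus 1 (Cmult 2 (Cinv (Cplus 1 (ex (2 * y))))) /\ Cplus 1 (ex (2*y)) <> RtoC 0.
Proof.
  intros Hc.
  assert (Hs := sin2_cos2 y). unfold Rsqr in Hs.
  assert (Hn: Cplus 1 (ex (2*y)) <> RtoC 0).
  { intro F. apply (f_equal fst) in F. unfold ex, Cplus, RtoC in F. simpl in F. rewrite cos_2a in F. apply Hc. nra. }
  split; auto.
  assert (E: Cmult (0, tan y) (Cplus 1 (ex (2*y))) = Cminus (ex (2*y)) 1).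
  { unfold ex, Cplus, Cmult, Cminus, Copp, RtoC. simpl. rewrite cos_2a, sin_2a. unfold tan.
    apply injective_projections; simpl; field_simplify; auto. nra.
    unfold Rdiv. apply Rmult_eq_reg_r with (cos y); auto. rewrite Rmult_assoc, Rinv_l; auto.
    transitivity (- sin y ^ 3 + sin y * cos y ^ 2 + sin y * (sin y * sin y + cos y * cos y)). rewrite Hs; ring. ring. }
  apply div_fact in E; auto. rewrite E. apply frac_fact; auto.
Qed.

Lemma tan_sum q y (p := (2*q+1)%nat) :
  cos (INR p * y) <> 0 -> (forall m, (m < p)%nat -> cos (y + INR m * PI / INR p) <> 0) ->
  rsum p (fun m => tan (y + INR m * PI / INR p)) = INR p * tan (INR p * y).
Proof.
  intros H1 H2. subst p.
  assert (Hp : INR (2*q+1) <> 0) by (apply not_0_INR; lia).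
  set (p := (2*q+1)%nat) in *.
  assert (Ang : forall m, 2 * (y + INR m * PI / INR p) = 2 * y + INR m * (2 * PI / INR p)).
  { intros. field. auto. }
  assert (Ang2 : 2 * (INR p * y) = INR p * (2 * y)) by ring.
  assert (K : ((0, rsum p (fun m => tan (y + INR m * PI / INR p))) : C) = (0, INR p * tan (INR p * y))).
  { rewrite <- csum_im.
    rewrite (csum_ext _ _ (fun m => Cplus 1 (Cmult (-2) (Cinv (Cplus 1 (ex (2 * y + INR m * (2 * PI / INR p)))))))).
    2: { intros m Hm. destruct (tanC _ (H2 m Hm)) as [E _]. rewrite E, Ang. unfold Cminus. ring. }
    rewrite csum_plus, csum_scal, csum_const. unfold p. rewrite sum_inv. fold p.
    2: { destruct (tanC _ H1) as [_ E]. rewrite Ang2 in E. auto. }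
    2: { intros m Hm. destruct (tanC _ (H2 m Hm)) as [_ E]. rewrite Ang in E. auto. }
    destruct (tanC _ H1) as [E E']. rewrite Ang2 in E, E'.
    transitivity (Cmult (RtoC (INR p)) ((0, tan (INR p * y)) : C)).
    rewrite E. unfold Cdiv, Cminus. ring.
    unfold Cmult, RtoC. simpl. f_equal; ring. }
  apply (f_equal snd) in K. simpl in K. auto.
Qed.


Definition T (K : nat) (j : Z) : R := tan (IZR j * PI / INR K).

Lemma tan_PI x : tan (x + PI) = tan x.
Proof. unfold tan. rewrite neg_sin, neg_cos. unfold Rdiv. rewrite Rinv_opp. ring. Qed.

Lemma tan_shift_nat x n : tan (x + INR n * PI) = tan x.
Proof. induction n. simpl. rewrite Rmult_0_l, Rplus_0_r. auto.
  rewrite S_INR. replace (x + (INR n + 1) * PI) with ((x + INR n * PI) + PI) by ring. rewrite tan_PI. auto. Qed.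

Lemma tan_shift x t : tan (x + IZR t * PI) = tan x.
Proof.
  destruct (Z_le_gt_dec 0 t).
  - rewrite <- (Z2Nat.id t) by lia. rewrite <- INR_IZR_INZ. apply tan_shift_nat.
  - replace t with (- Z.of_nat (Z.to_nat (- t)))%Z by lia. rewrite opp_IZR, <- INR_IZR_INZ.
    rewrite <- (tan_shift_nat (x + - INR (Z.to_nat (- t)) * PI) (Z.to_nat (-t))). f_equal. ring.
Qed.

Lemma T_period K j t : K <> O -> T K (j + t * Z.of_nat K) = T K j.
Proof.
  intros HK. unfold T. rewrite plus_IZR, mult_IZR, <- INR_IZR_INZ.
  replace ((IZR j + IZR t * INR K) * PI / INR K) with (IZR j * PI / INR K + IZR t * PI).
  apply tan_shift. field. apply not_0_INR; auto.
Qed.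

Lemma T_scale K d j : K <> O -> d <> O -> T (K * d) (j * Z.of_nat d) = T K j.
Proof.
  intros HK Hd. unfold T. f_equal. rewrite mult_IZR, mult_INR, <- INR_IZR_INZ. field.
  split; apply not_0_INR; auto.
Qed.

Lemma T_neg K j : T K (- j) = - T K j.
Proof. unfold T. rewrite opp_IZR, <- tan_neg. f_equal. unfold Rdiv. ring. Qed.

Lemma cos_nz K j : (3 <= K)%nat -> Z.gcd j (Z.of_nat K) = 1%Z -> cos (IZR j * PI / INR K) <> 0.
Proof.
  intros HK Hg Hc. apply cos_eq_0_0 in Hc. destruct Hc as [k Hk].
  assert (HKn : INR K <> 0) by (apply not_0_INR; lia).
  assert (E : (2 * j = Z.of_nat K * (2 * k + 1))%Z).
  { apply eq_IZR. rewrite !mult_IZR, plus_IZR, <- INR_IZR_INZ.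
    apply Rmult_eq_reg_r with (PI / (2 * INR K)).
    2: { apply Rmult_integral_contrapositive; split. apply PI_neq0. apply Rinv_neq_0_compat. lra. }
    transitivity (IZR j * PI / INR K). field. auto. rewrite Hk, mult_IZR. field. auto. }
  assert (D : (Z.of_nat K | j * 2)%Z) by (exists (2 * k + 1)%Z; lia).
  apply Z.gauss in D. 2: { rewrite Z.gcd_comm. auto. }
  apply Z.divide_pos_le in D; lia.
Qed.

Definition Closed (S : R -> Prop) :=
  S 0 /\ (forall x y, S x -> S y -> S (x + y)) /\ (forall q x, S x -> S (Q2R q * x)).

Lemma Q2R_Z z : Q2R (inject_Z z) = IZR z.
Proof. unfold Q2R, inject_Z. simpl. rewrite Rinv_1. ring. Qed.

Lemma cl_mulZ S z x : Closed S -> S x -> S (IZR z * x).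
Proof. intros (H0 & H1 & H2) Hx. rewrite <- Q2R_Z. auto. Qed.

Lemma cl_divZ S z x : Closed S -> z <> 0%Z -> S x -> S (x / IZR z).
Proof. intros (H0 & H1 & H2) Hz Hx.
  replace (x / IZR z) with (Q2R (Qinv (inject_Z z)) * x). auto.
  rewrite Q2R_inv, Q2R_Z. unfold Rdiv; ring.
  intro E. apply Hz. unfold Qeq, inject_Z in E. simpl in E. lia.
Qed.

Lemma cl_add S x y : Closed S -> S x -> S y -> S (x + y).
Proof. intros (H0 & H1 & H2). auto. Qed.

Lemma cl_opp S x : Closed S -> S x -> S (- x).
Proof. intros H Hx. replace (- x) with (IZR (-1) * x) by (simpl; ring). apply cl_mulZ; auto. Qed.

Lemma cl_sub S x y : Closed S -> S x -> S y -> S (x - y).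
Proof. intros H Hx Hy. unfold Rminus. apply cl_add; auto. apply cl_opp; auto. Qed.

Lemma cl_0 S : Closed S -> S 0.
Proof. intros (H0 & _). auto. Qed.

Lemma cl_rsum S n f : Closed S -> (forall m, (m < n)%nat -> S (f m)) -> S (rsum n f).
Proof. intros HS. induction n; intros H; simpl. apply cl_0; auto. apply cl_add; auto. Qed.

Lemma cl_ext (S : R -> Prop) (x y : R) : S x -> x = y -> S y.
Proof. intros; subst; auto. Qed.


Definition InSpan (N : nat) (x : R) := exists c : nat -> Q,
  x = sum_f_R0 (fun j => if primitive_idx N j then Q2R (c j) * star_point N j else 0) N.

Lemma sumf_plus f g n : sum_f_R0 (fun i => f i + g i) n = sum_f_R0 f n + sum_f_R0 g n.
Proof. induction n; simpl. auto. rewrite IHn. ring. Qed.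

Lemma sumf_scal a f n : sum_f_R0 (fun i => a * f i) n = a * sum_f_R0 f n.
Proof. induction n; simpl. auto. rewrite IHn. ring. Qed.

Lemma sumf_ext f g n : (forall i, f i = g i) -> sum_f_R0 f n = sum_f_R0 g n.
Proof. intros H. induction n; simpl; rewrite ?IHn, ?H; auto. Qed.

Lemma InSpan_closed N : Closed (InSpan N).
Proof.
  split; [|split].
  - exists (fun _ => 0%Q). rewrite (sumf_ext _ (fun _ => 0 * 0)). rewrite sumf_scal. ring.
    intros i. destruct (primitive_idx N i). unfold Q2R. simpl. ring. ring.
  - intros x y [c1 H1] [c2 H2]. exists (fun j => (c1 j + c2 j)%Q). subst. rewrite <- sumf_plus.
    apply sumf_ext. intros i. destruct (primitive_idx N i). rewrite Q2R_plus. ring. ring.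
  - intros q x [c H]. exists (fun j => (q * c j)%Q). subst. rewrite <- sumf_scal.
    apply sumf_ext. intros i. destruct (primitive_idx N i). rewrite Q2R_mult. ring. ring.
Qed.

Lemma InSpan_gen N k : primitive_idx N k = true -> InSpan N (star_point N k).
Proof.
  intros Hk. exists (fun i => if Nat.eqb i k then 1%Q else 0%Q).
  assert (Hle : (k <= N)%nat).
  { unfold primitive_idx in Hk. apply andb_prop in Hk as [Hk _]. apply andb_prop in Hk as [_ Hk].
    apply Nat.ltb_lt in Hk. lia. }
  assert (G : forall n, sum_f_R0 (fun j => if primitive_idx N j then Q2R (if Nat.eqb j k then 1%Q else 0%Q) * star_point N j else 0) n
            = if Nat.leb k n then star_point N k else 0).
  { induction n.
    - destruct k. unfold primitive_idx in Hk. simpl in Hk. discriminate. simpl. reflexivity.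
    - change (sum_f_R0 ?f (S n)) with (sum_f_R0 f n + f (S n)). rewrite IHn.
      destruct (Nat.eqb_spec (S n) k).
      + subst. cbv beta. rewrite Hk. replace (Nat.leb (S n) n) with false.
        replace (Nat.leb (S n) (S n)) with true. unfold Q2R; simpl. field.
        symmetry; apply Nat.leb_le; lia. symmetry; apply Nat.leb_gt; lia.
      + cbv beta.
        destruct (Nat.leb_spec k n); destruct (Nat.leb_spec k (S n)); try lia;
        destruct (primitive_idx N (S n)); unfold Q2R; simpl; ring. }
  rewrite G. replace (Nat.leb k N) with true. auto. symmetry; apply Nat.leb_le; auto.
Qed.

Lemma star_T N k : star_point N k = T N (Z.of_nat k).
Proof. unfold star_point, T. rewrite <- INR_IZR_INZ. auto. Qed.

Lemma nat_div_Z a b : Nat.divide a b -> Z.divide (Z.of_nat a) (Z.of_nat b).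
Proof. intros [c H]. exists (Z.of_nat c). subst. lia. Qed.

Lemma Z_div_nat a b : Z.divide (Z.of_nat a) (Z.of_nat b) -> Nat.divide a b.
Proof.
  intros [c H]. destruct a.
  - simpl in H. exists O. lia.
  - assert (Hc : (0 <= c)%Z) by nia. exists (Z.to_nat c). apply Nat2Z.inj. rewrite Nat2Z.inj_mul, Z2Nat.id; lia.
Qed.

Lemma gcd_nat_Z a b : Z.of_nat (Nat.gcd a b) = Z.gcd (Z.of_nat a) (Z.of_nat b).
Proof.
  symmetry. apply Z.gcd_unique. lia. apply nat_div_Z, Nat.gcd_divide_l. apply nat_div_Z, Nat.gcd_divide_r.
  intros q H1 H2. apply Z.divide_abs_l in H1, H2. apply Z.divide_abs_l.
  replace (Z.abs q) with (Z.of_nat (Z.abs_nat q)) in * by lia.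
  apply nat_div_Z. apply Nat.gcd_greatest; apply Z_div_nat; auto.
Qed.

Lemma prim_of N r : (0 < r)%Z -> (2 * r < Z.of_nat N)%Z -> Z.gcd r (Z.of_nat N) = 1%Z ->
  primitive_idx N (Z.to_nat r) = true.
Proof.
  intros H1 H2 H3. unfold primitive_idx.
  assert (G : Nat.gcd (Z.to_nat r) N = 1%nat).
  { apply Nat2Z.inj. rewrite gcd_nat_Z, Z2Nat.id by lia. auto. }
  rewrite G. apply andb_true_intro; split; [apply andb_true_intro; split|].
  apply Nat.leb_le; lia. apply Nat.ltb_lt; lia. auto.
Qed.

Lemma gen_T N j : (3 <= N)%nat -> Z.gcd j (Z.of_nat N) = 1%Z -> InSpan N (T N j).
Proof.
  intros HN Hg.
  set (r := (j mod Z.of_nat N)%Z).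
  assert (Hr : (0 <= r < Z.of_nat N)%Z) by (apply Z.mod_pos_bound; lia).
  assert (Ej : j = (r + (j / Z.of_nat N) * Z.of_nat N)%Z) by (unfold r; rewrite (Z.div_mod j (Z.of_nat N)) at 1; lia).
  assert (Tj : T N j = T N r) by (rewrite Ej; apply T_period; lia).
  assert (Hgr : Z.gcd r (Z.of_nat N) = 1%Z).
  { unfold r. rewrite Z.gcd_mod by lia. rewrite Z.gcd_comm. auto. }
  assert (Hr0 : r <> 0%Z) by (intro E; rewrite E, Z.gcd_0_l in Hgr; lia).
  assert (Hr2 : (2 * r <> Z.of_nat N)%Z).
  { intro E. rewrite <- E in Hgr. rewrite (Z.mul_comm 2 r), Z.gcd_mul_diag_l in Hgr; lia. }
  rewrite Tj. destruct (Z_lt_ge_dec (2 * r) (Z.of_nat N)).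
  - pose proof (InSpan_gen N (Z.to_nat r) (prim_of N r ltac:(lia) l Hgr)) as G.
    rewrite star_T, Z2Nat.id in G by lia. auto.
  - set (s := (Z.of_nat N - r)%Z).
    assert (Hgs : Z.gcd s (Z.of_nat N) = 1%Z).
    { unfold s. rewrite <- (Z.gcd_opp_l r) in Hgr. rewrite Z.gcd_comm in *.
      replace (Z.of_nat N - r)%Z with (- r + 1 * Z.of_nat N)%Z by ring.
      rewrite Z.gcd_add_mult_diag_r. auto. }
    pose proof (InSpan_gen N (Z.to_nat s) (prim_of N s ltac:(lia) ltac:(lia) Hgs)) as G.
    rewrite star_T, Z2Nat.id in G by lia.
    replace r with (- s + 1 * Z.of_nat N)%Z by (unfold s; ring).
    rewrite T_period, T_neg by lia. apply cl_opp. apply InSpan_closed. auto.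
Qed.


Lemma rsum_ext n f g : (forall i, (i < n)%nat -> f i = g i) -> rsum n f = rsum n g.
Proof. induction n; intros H; simpl; auto. rewrite IHn by (intros; apply H; lia). rewrite H by lia. auto. Qed.

Lemma rsum_first n f : rsum (S n) f = f O + rsum n (fun i => f (S i)).
Proof. induction n; simpl in *. ring. rewrite IHn. ring. Qed.

Lemma angle_T M p j : M <> O -> p <> O -> IZR j * PI / INR (M * p) = IZR j * PI / INR (M * p). Proof. auto. Qed.

Lemma sumT M q a (p := (2*q+1)%nat) : M <> O ->
  cos (IZR a * PI / INR M) <> 0 ->
  (forall m, (m < p)%nat -> cos (IZR (a + Z.of_nat m * Z.of_nat M) * PI / INR (M * p)) <> 0) ->
  rsum p (fun m => T (M * p) (a + Z.of_nat m * Z.of_nat M)) = INR p * T M a.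
Proof.
  intros HM H1 H2. subst p.
  assert (HMr : INR M <> 0) by (apply not_0_INR; auto).
  assert (Hpr : INR (2*q+1) <> 0) by (apply not_0_INR; lia).
  set (y := IZR a * PI / INR (M * (2*q+1))).
  assert (A1 : forall m, IZR (a + Z.of_nat m * Z.of_nat M) * PI / INR (M * (2*q+1)) = y + INR m * PI / INR (2*q+1)).
  { intros m. unfold y. rewrite plus_IZR, mult_IZR, <- !INR_IZR_INZ, mult_INR. field. auto. }
  assert (A2 : INR (2*q+1) * y = IZR a * PI / INR M).
  { unfold y. rewrite mult_INR. field. auto. }
  unfold T. rewrite (rsum_ext _ _ (fun m => tan (y + INR m * PI / INR (2*q+1)))).
  2: { intros i _. rewrite A1. auto. }
  rewrite tan_sum. rewrite A2. auto.
  rewrite A2. auto.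
  intros m Hm. rewrite <- A1. auto.
Qed.


Lemma mod_eq_div M a b : (0 < M)%Z -> (a mod M = b mod M)%Z -> (M | b - a)%Z.
Proof.
  intros HM E. exists (b / M - a / M)%Z.
  rewrite (Z.div_mod a M) at 1 by lia. rewrite (Z.div_mod b M) at 1 by lia. rewrite E. ring.
Qed.

Lemma pow_order (M : nat) (u : Z) : (1 <= M)%nat -> Z.gcd u (Z.of_nat M) = 1%Z ->
  exists n : nat, (1 <= n)%nat /\ (Z.of_nat M | u ^ Z.of_nat n - 1)%Z.
Proof.
  intros HM Hu. apply NNPP. intros Hno.
  set (g := fun k : nat => Z.to_nat ((u ^ Z.of_nat k) mod Z.of_nat M)).
  assert (Key : forall x y : nat, (x < y)%nat -> g x = g y -> False).
  { intros x y Hxy E. apply Hno. exists (y - x)%nat. split. lia.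
    unfold g in E. apply Z2Nat.inj in E; try (apply Z.mod_pos_bound; lia).
    apply mod_eq_div in E; [|lia].
    replace (u ^ Z.of_nat y - u ^ Z.of_nat x)%Z with (u ^ Z.of_nat x * (u ^ Z.of_nat (y - x) - 1))%Z in E.
    2: { rewrite Z.mul_sub_distr_l, <- Z.pow_add_r by lia. f_equal. f_equal. lia. ring. }
    apply Z.gauss in E. auto.
    apply Zgcd_1_rel_prime. apply Zpow_facts.rel_prime_Zpower_r. lia.
    apply rel_prime_sym. apply Zgcd_1_rel_prime. auto. }
  assert (ND : NoDup (map g (seq 0 (S M)))).
  { apply NoDup_map_NoDup_ForallPairs. 2: apply seq_NoDup.
    intros x y _ _ E. destruct (Nat.lt_trichotomy x y) as [H|[H|H]]; auto.
    exfalso; eapply Key; eauto. exfalso; eapply Key; eauto. }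
  assert (Inc : incl (map g (seq 0 (S M))) (seq 0 M)).
  { intros z Hz. apply in_map_iff in Hz. destruct Hz as [k [Hk _]]. subst z.
    apply in_seq. unfold g. split. lia.
    assert (B := Z.mod_pos_bound (u ^ Z.of_nat k) (Z.of_nat M) ltac:(lia)). lia. }
  apply NoDup_incl_length in Inc; auto. rewrite length_map, !length_seq in Inc. lia.
Qed.

Lemma cop_mul x y M : Z.gcd x M = 1%Z -> Z.gcd y M = 1%Z -> Z.gcd (x * y) M = 1%Z.
Proof.
  intros H1 H2. apply Zgcd_1_rel_prime. apply rel_prime_sym. apply rel_prime_mult;
  apply rel_prime_sym; apply Zgcd_1_rel_prime; auto.
Qed.

Lemma cop_pow x M k : Z.gcd x M = 1%Z -> Z.gcd (x ^ Z.of_nat k) M = 1%Z.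
Proof.
  intros H. apply Zgcd_1_rel_prime. apply rel_prime_sym. apply Zpow_facts.rel_prime_Zpower_r. lia.
  apply rel_prime_sym; apply Zgcd_1_rel_prime; auto.
Qed.

Lemma pow_big r n : (2 <= Z.abs r)%Z -> (1 <= n)%nat -> (2 <= Z.abs (r ^ Z.of_nat n))%Z.
Proof.
  intros Hr Hn. rewrite Z.abs_pow. induction n. lia.
  destruct n. simpl. lia. rewrite Nat2Z.inj_succ, Z.pow_succ_r by lia.
  assert (2 <= Z.abs r ^ Z.of_nat (S n))%Z by (apply IHn; lia). nia.
Qed.

Lemma cycle (S : R -> Prop) (M : nat) (f : Z -> R) (u r : Z) :
  Closed S -> (1 <= M)%nat -> (2 <= Z.abs r)%Z -> Z.gcd u (Z.of_nat M) = 1%Z ->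
  (forall a t, f (a + t * Z.of_nat M)%Z = f a) ->
  (forall a, Z.gcd a (Z.of_nat M) = 1%Z -> S (f a - IZR r * f (u * a)%Z)) ->
  forall a, Z.gcd a (Z.of_nat M) = 1%Z -> S (f a).
Proof.
  intros HS HM Hr Hu Hper Hrel.
  assert (Hk : forall k a, Z.gcd a (Z.of_nat M) = 1%Z ->
     S (f a - IZR (r ^ Z.of_nat k) * f (u ^ Z.of_nat k * a)%Z)).
  { induction k; intros a Ha.
    - apply (cl_ext S 0). apply cl_0; auto. change (r ^ Z.of_nat 0)%Z with 1%Z. change (u ^ Z.of_nat 0)%Z with 1%Z. rewrite Z.mul_1_l. simpl. ring.
    - apply (cl_ext S ((f a - IZR (r ^ Z.of_nat k) * f (u ^ Z.of_nat k * a)%Z)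
                 + IZR (r ^ Z.of_nat k) * (f (u ^ Z.of_nat k * a)%Z - IZR r * f (u * (u ^ Z.of_nat k * a))%Z))).
      apply cl_add; auto. apply cl_mulZ; auto. apply Hrel. apply cop_mul; auto. apply cop_pow; auto.
      rewrite Nat2Z.inj_succ, !Z.pow_succ_r by lia. rewrite mult_IZR, Z.mul_assoc. ring. }
  intros a Ha.
  destruct (pow_order M u HM Hu) as [n [Hn [t Ht]]].
  assert (E : f (u ^ Z.of_nat n * a)%Z = f a).
  { replace (u ^ Z.of_nat n * a)%Z with (a + (t * a) * Z.of_nat M)%Z. apply Hper.
    replace (u ^ Z.of_nat n)%Z with (t * Z.of_nat M + 1)%Z by lia. ring. }
  specialize (Hk n a Ha). rewrite E in Hk.
  assert (B := pow_big r n Hr Hn).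
  apply (cl_ext S ((f a - IZR (r ^ Z.of_nat n) * f a) / IZR (1 - r ^ Z.of_nat n))).
  apply cl_divZ; auto. lia.
  rewrite minus_IZR. field. intro Z0. apply (f_equal (fun x => x + IZR (r ^ Z.of_nat n))) in Z0.
  ring_simplify in Z0. replace 1 with (IZR 1) in Z0 by auto. apply eq_IZR in Z0. rewrite <- Z0 in B. simpl in B. lia.
Qed.


Lemma L1 x : sin x <> 0 -> cos x <> 0 -> tan (PI/2 - x) = tan x + 2 * tan (PI/2 - 2*x).
Proof.
  intros Hs Hc. unfold tan. rewrite !sin_shift, !cos_shift, sin_2a, cos_2a.
  field. auto.
Qed.

Lemma L2 y : cos (PI/4 + y) <> 0 -> cos (PI/4 - y) <> 0 ->
  tan (2*y) = (tan (PI/4 + y) - tan (PI/4 - y)) / 2.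
Proof.
  intros H1 H2. unfold tan. rewrite sin_2a, cos_2a, sin_plus, sin_minus, cos_plus, cos_minus in *.
  assert (E : sin (PI/4) = cos (PI/4)) by (rewrite sin_PI4, cos_PI4; auto).
  rewrite E in *. set (k := cos (PI/4)) in *.
  assert (Hk : k <> 0) by (intro; apply H1; rewrite H; ring).
  assert (A : cos y - sin y <> 0) by (intro; apply H1; replace (k * cos y - k * sin y) with (k * (cos y - sin y)) by ring; rewrite H; ring).
  assert (B : cos y + sin y <> 0) by (intro; apply H2; replace (k * cos y + k * sin y) with (k * (cos y + sin y)) by ring; rewrite H; ring).
  assert (C : cos y * cos y - sin y * sin y <> 0) by (replace (cos y * cos y - sin y * sin y) with ((cos y - sin y) * (cos y + sin y)) by ring; apply Rmult_integral_contrapositive; split; auto).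
  field. repeat split; auto.
Qed.

Lemma L3 x : sin x <> 0 -> cos x <> 0 -> cos (2*x) <> 0 ->
  tan (2*x) = (tan (PI/2 - x) - tan x) / 2 - 2 * tan (PI/2 - 4*x).
Proof.
  intros Hs Hc H2. unfold tan. rewrite !sin_shift, !cos_shift.
  replace (4*x) with (2*(2*x)) by ring. rewrite (sin_2a (2*x)), (cos_2a (2*x)).
  rewrite cos_2a in *. rewrite sin_2a.
  field. repeat split; auto.
Qed.

Lemma cop_shift x k M : Z.gcd (x + k * M) M = Z.gcd x M.
Proof. rewrite Z.gcd_comm, Z.gcd_add_mult_diag_r. apply Z.gcd_comm. Qed.

Lemma cop_div x a b : Z.gcd x (a * b) = 1%Z -> Z.gcd x a = 1%Z.
Proof.
  intros H. assert (D : (Z.gcd x a | 1)%Z).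
  { rewrite <- H. apply Z.gcd_greatest. apply Z.gcd_divide_l.
    apply Z.divide_mul_l. apply Z.gcd_divide_r. }
  apply Z.divide_1_r_nonneg in D; auto. apply Z.gcd_nonneg.
Qed.

Lemma cop_prod x a b : Z.gcd x a = 1%Z -> Z.gcd x b = 1%Z -> Z.gcd x (a * b) = 1%Z.
Proof. intros. rewrite Z.gcd_comm. apply cop_mul; rewrite Z.gcd_comm; auto. Qed.

Lemma cop_odd t : Z.gcd (2 * t + 1) 2 = 1%Z.
Proof. replace (2 * t + 1)%Z with (1 + t * 2)%Z by ring. rewrite cop_shift. reflexivity. Qed.

Lemma odd_of_cop a L : Z.gcd a (2 * L) = 1%Z -> exists t, a = (2 * t + 1)%Z.
Proof.
  intros H. apply cop_div in H. exists (a / 2)%Z.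
  assert (Hm := Z.mod_pos_bound a 2 ltac:(lia)).
  assert (E := Z.div_mod a 2 ltac:(lia)).
  destruct (Z.eq_dec (a mod 2) 0) as [Z0|Z0]; [|lia].
  exfalso. assert (D : (2 | Z.gcd a 2)%Z). { apply Z.gcd_greatest. exists (a/2)%Z. lia. apply Z.divide_refl. }
  rewrite H in D. apply Z.divide_1_r_nonneg in D; lia.
Qed.

Lemma cop_neg x M : Z.gcd (- x) M = Z.gcd x M.
Proof. apply Z.gcd_opp_l. Qed.


Lemma cop2_odd L M : M = (2 * L + 1)%Z -> Z.gcd 2 M = 1%Z.
Proof. intros ->. rewrite Z.gcd_comm. apply cop_odd. Qed.

Lemma stepA (S : R -> Prop) (M : nat) L : Closed S -> (3 <= M)%nat -> Z.of_nat M = (2 * L + 1)%Z ->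
  (forall b, Z.gcd b (Z.of_nat (M * 2)) = 1%Z -> S (T (M * 2) b)) ->
  forall c, Z.gcd c (Z.of_nat M) = 1%Z -> S (T M c).
Proof.
  intros HS HM HL H c Hc.
  assert (HN : Z.of_nat (M * 2) = (Z.of_nat M * 2)%Z) by lia.
  assert (G2 : Z.gcd 2 (Z.of_nat M) = 1%Z) by (eapply cop2_odd; eauto).
  assert (C1 : Z.gcd (Z.of_nat M - 2 * c) (Z.of_nat (M * 2)) = 1%Z).
  { rewrite HN. apply cop_prod.
    - replace (Z.of_nat M - 2 * c)%Z with (- (2 * c) + 1 * Z.of_nat M)%Z by ring.
      rewrite cop_shift, cop_neg. apply cop_mul; auto.
    - replace (Z.of_nat M - 2 * c)%Z with (2 * (L - c) + 1)%Z by lia. apply cop_odd. }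
  assert (C2 : Z.gcd (4 * c - Z.of_nat M) (Z.of_nat (M * 2)) = 1%Z).
  { rewrite HN. apply cop_prod.
    - replace (4 * c - Z.of_nat M)%Z with (2 * (2 * c) + (-1) * Z.of_nat M)%Z by ring.
      rewrite cop_shift. apply cop_mul; auto. apply cop_mul; auto.
    - replace (4 * c - Z.of_nat M)%Z with (2 * (2 * c - L - 1) + 1)%Z by lia. apply cop_odd. }
  assert (HMr : INR M <> 0) by (apply not_0_INR; lia).
  set (x := IZR (Z.of_nat M - 2 * c) * PI / INR (M * 2)).
  assert (A1 : IZR c * PI / INR M = PI / 2 - x).
  { unfold x. rewrite minus_IZR, mult_IZR, <- INR_IZR_INZ, mult_INR. simpl INR. field. auto. }
  assert (A2 : IZR (4 * c - Z.of_nat M) * PI / INR (M * 2) = PI / 2 - 2 * x).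
  { unfold x. rewrite !minus_IZR, !mult_IZR, <- INR_IZR_INZ, mult_INR. simpl INR. field. auto. }
  assert (Hcx : cos x <> 0) by (apply cos_nz; auto; lia).
  assert (Hsx : sin x <> 0).
  { rewrite <- cos_shift, <- A1. apply cos_nz; auto. }
  apply (cl_ext S (T (M * 2) (Z.of_nat M - 2 * c) + IZR 2 * T (M * 2) (4 * c - Z.of_nat M))).
  apply cl_add; auto. apply cl_mulZ; auto.
  unfold T. rewrite A2. fold x. rewrite A1. symmetry. apply L1; auto.
Qed.

Lemma stepB (S : R -> Prop) (M : nat) L K : Closed S -> (3 <= M)%nat -> Z.of_nat M = (2 * L)%Z -> L = (2 * K)%Z ->
  (forall b, Z.gcd b (Z.of_nat (M * 2)) = 1%Z -> S (T (M * 2) b)) ->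
  forall a, Z.gcd a (Z.of_nat M) = 1%Z -> S (T M a).
Proof.
  intros HS HM HL HK H a Ha.
  assert (HN : Z.of_nat (M * 2) = (L * (2 * 2))%Z) by lia.
  rewrite HL in Ha. destruct (odd_of_cop a L Ha) as [t Ht].
  assert (HaL : Z.gcd a L = 1%Z) by (rewrite Z.mul_comm in Ha; eapply cop_div; eauto).
  assert (C1 : Z.gcd (L + a) (Z.of_nat (M * 2)) = 1%Z).
  { rewrite HN. apply cop_prod.
    - replace (L + a)%Z with (a + 1 * L)%Z by ring. rewrite cop_shift. auto.
    - apply cop_prod; replace (L + a)%Z with (2 * (K + t) + 1)%Z by lia; apply cop_odd. }
  assert (C2 : Z.gcd (L - a) (Z.of_nat (M * 2)) = 1%Z).
  { rewrite HN. apply cop_prod.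
    - replace (L - a)%Z with (- a + 1 * L)%Z by ring. rewrite cop_shift, cop_neg. auto.
    - apply cop_prod; replace (L - a)%Z with (2 * (K - t - 1) + 1)%Z by lia; apply cop_odd. }
  assert (HMr : INR M <> 0) by (apply not_0_INR; lia).
  assert (HLr : INR M = 2 * IZR L) by (rewrite INR_IZR_INZ, HL, mult_IZR; auto).
  set (y := IZR a * PI / INR (M * 2)).
  assert (A1 : IZR (L + a) * PI / INR (M * 2) = PI / 4 + y).
  { unfold y. rewrite plus_IZR, mult_INR, HLr. simpl INR. field. rewrite HLr in HMr. intro Z0; apply HMr; lra. }
  assert (A2 : IZR (L - a) * PI / INR (M * 2) = PI / 4 - y).
  { unfold y. rewrite minus_IZR, mult_INR, HLr. simpl INR. field. rewrite HLr in HMr. intro Z0; apply HMr; lra. }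
  assert (A3 : IZR a * PI / INR M = 2 * y).
  { unfold y. rewrite mult_INR. simpl INR. field. auto. }
  apply (cl_ext S ((T (M * 2) (L + a) - T (M * 2) (L - a)) / IZR 2)).
  apply cl_divZ; auto. lia. apply cl_sub; auto.
  unfold T. rewrite A1, A2, A3. symmetry. apply L2.
  rewrite <- A1. apply cos_nz; auto. lia.
  rewrite <- A2. apply cos_nz; auto. lia.
Qed.

Lemma stepC (S : R -> Prop) (M : nat) L K : Closed S -> (3 <= M)%nat -> Z.of_nat M = (2 * L)%Z -> L = (2 * K + 1)%Z ->
  (forall b, Z.gcd b (Z.of_nat (M * 2)) = 1%Z -> S (T (M * 2) b)) ->
  forall a, Z.gcd a (Z.of_nat M) = 1%Z -> S (T M a).
Proof.
  intros HS HM HL HK H.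
  assert (HN : Z.of_nat (M * 2) = (Z.of_nat M * 2)%Z) by lia.
  assert (HMr : INR M <> 0) by (apply not_0_INR; lia).
  apply (cycle S M (T M) (L - 2) (-2)); auto. lia. lia.
  - rewrite HL. apply cop_prod.
    + replace (L - 2)%Z with (2 * (K - 1) + 1)%Z by lia. apply cop_odd.
    + replace (L - 2)%Z with (Z.opp 2 + 1 * L)%Z by ring. rewrite cop_shift, cop_neg. eapply cop2_odd; eauto.
  - intros a t. apply T_period. lia.
  - intros a Ha.
    assert (Ha2 := Ha). rewrite HL in Ha2. destruct (odd_of_cop a L Ha2) as [s Hs].
    assert (Ga : Z.gcd a (Z.of_nat (M * 2)) = 1%Z).
    { rewrite HN. apply cop_prod; auto. rewrite Hs. apply cop_odd. }
    assert (Gb : Z.gcd (Z.of_nat M - a) (Z.of_nat (M * 2)) = 1%Z).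
    { rewrite HN. apply cop_prod.
      - replace (Z.of_nat M - a)%Z with (- a + 1 * Z.of_nat M)%Z by ring. rewrite cop_shift, cop_neg. auto.
      - replace (Z.of_nat M - a)%Z with (2 * (L - s - 1) + 1)%Z by lia. apply cop_odd. }
    set (x := IZR a * PI / INR (M * 2)).
    assert (A1 : IZR (Z.of_nat M - a) * PI / INR (M * 2) = PI / 2 - x).
    { unfold x. rewrite minus_IZR, <- INR_IZR_INZ, mult_INR. simpl INR. field. auto. }
    assert (A2 : IZR a * PI / INR M = 2 * x).
    { unfold x. rewrite mult_INR. simpl INR. field. auto. }
    assert (Per : T M ((L - 2) * a) = T M (L - 2 * a)).
    { replace (L - 2 * a)%Z with ((L - 2) * a + (- s) * Z.of_nat M)%Z by (rewrite HL, Hs, HK; ring).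
      symmetry. apply T_period. lia. }
    assert (A3 : IZR (L - 2 * a) * PI / INR M = PI / 2 - 4 * x).
    { unfold x. rewrite minus_IZR, mult_IZR, mult_INR, INR_IZR_INZ, HL, mult_IZR. simpl INR. field.
      rewrite INR_IZR_INZ, HL, mult_IZR in HMr. intro Z0. apply HMr. rewrite Z0. ring. }
    assert (Hcx : cos x <> 0) by (apply cos_nz; auto; lia).
    assert (Hsx : sin x <> 0) by (rewrite <- cos_shift, <- A1; apply cos_nz; auto; lia).
    assert (Hc2 : cos (2 * x) <> 0) by (rewrite <- A2; apply cos_nz; auto).
    apply (cl_ext S ((T (M * 2) (Z.of_nat M - a) - T (M * 2) a) / IZR 2)).
    apply cl_divZ; auto. lia. apply cl_sub; auto.
    rewrite Per. unfold T. rewrite A1, A2, A3. fold x. rewrite (L3 x); auto. simpl. ring.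
Qed.


Lemma rsum_first' n f : (0 < n)%nat -> rsum n f = f O + rsum (n - 1) (fun i => f (S i)).
Proof. intros H. destruct n. lia. rewrite rsum_first. f_equal. f_equal. lia. Qed.

Lemma stepD (S : R -> Prop) (M : nat) q w : Closed S -> (3 <= M)%nat ->
  Z.of_nat M = (Z.of_nat (2*q+1) * w)%Z ->
  (forall b, Z.gcd b (Z.of_nat (M * (2*q+1))) = 1%Z -> S (T (M * (2*q+1)) b)) ->
  forall a, Z.gcd a (Z.of_nat M) = 1%Z -> S (T M a).
Proof.
  intros HS HM Hw H a Ha.
  set (p := (2*q+1)%nat) in *.
  assert (HN : Z.of_nat (M * p) = (Z.of_nat M * Z.of_nat p)%Z) by lia.
  assert (Hap : Z.gcd a (Z.of_nat p) = 1%Z) by (rewrite Hw in Ha; eapply cop_div; eauto).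
  assert (Cm : forall m : nat, Z.gcd (a + Z.of_nat m * Z.of_nat M) (Z.of_nat (M * p)) = 1%Z).
  { intros m. rewrite HN. apply cop_prod. rewrite cop_shift; auto.
    rewrite Hw. replace (a + Z.of_nat m * (Z.of_nat p * w))%Z with (a + (Z.of_nat m * w) * Z.of_nat p)%Z by ring.
    rewrite cop_shift. auto. }
  assert (E := sumT M q a ltac:(lia) (cos_nz M a HM Ha)
     (fun m _ => cos_nz (M * p) _ ltac:(unfold p; lia) (Cm m))).
  fold p in E.
  apply (cl_ext S (rsum p (fun m => T (M * p) (a + Z.of_nat m * Z.of_nat M)) / IZR (Z.of_nat p))).
  apply cl_divZ; auto. unfold p; lia. apply cl_rsum; auto.
  rewrite E, <- INR_IZR_INZ. field. apply not_0_INR. unfold p; lia.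
Qed.

Lemma stepE (S : R -> Prop) (M : nat) q : Closed S -> (3 <= M)%nat ->
  prime (Z.of_nat (2*q+1)) -> ~ (Z.of_nat (2*q+1) | Z.of_nat M)%Z ->
  (forall b, Z.gcd b (Z.of_nat (M * (2*q+1))) = 1%Z -> S (T (M * (2*q+1)) b)) ->
  forall a, Z.gcd a (Z.of_nat M) = 1%Z -> S (T M a).
Proof.
  intros HS HM Hpr Hnd H.
  set (p := (2*q+1)%nat) in *.
  assert (HN : Z.of_nat (M * p) = (Z.of_nat M * Z.of_nat p)%Z) by lia.
  assert (HpM : Z.gcd (Z.of_nat p) (Z.of_nat M) = 1%Z) by (apply Zgcd_1_rel_prime, prime_rel_prime; auto).
  assert (Hp3 : (3 <= p)%nat).
  { destruct q. exfalso. destruct Hpr as [Hp _]. unfold p in Hp. simpl in Hp. lia. unfold p; lia. }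
  apply (cycle S M (T M) (Z.of_nat p) (Z.of_nat p)); auto. lia. lia.
  - intros a t. apply T_period. lia.
  - intros b Hb.
    assert (Gpb : Z.gcd (Z.of_nat p * b) (Z.of_nat M) = 1%Z) by (apply cop_mul; auto).
    assert (Cm : forall m : nat, (1 <= m < p)%nat ->
       Z.gcd (Z.of_nat p * b + Z.of_nat m * Z.of_nat M) (Z.of_nat (M * p)) = 1%Z).
    { intros m Hm. rewrite HN. apply cop_prod. rewrite cop_shift; auto.
      replace (Z.of_nat p * b + Z.of_nat m * Z.of_nat M)%Z with (Z.of_nat m * Z.of_nat M + b * Z.of_nat p)%Z by ring.
      rewrite cop_shift. apply cop_mul. apply Zgcd_1_rel_prime, rel_prime_le_prime; auto. lia.
      rewrite Z.gcd_comm; auto. }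
    assert (HMr : INR M <> 0) by (apply not_0_INR; lia).
    assert (Hpr' : INR p <> 0) by (apply not_0_INR; lia).
    assert (A0 : IZR (Z.of_nat p * b + Z.of_nat 0 * Z.of_nat M) * PI / INR (M * p) = IZR b * PI / INR M).
    { rewrite plus_IZR, !mult_IZR, <- !INR_IZR_INZ, mult_INR. simpl INR. field. auto. }
    assert (Cos : forall m, (m < p)%nat -> cos (IZR (Z.of_nat p * b + Z.of_nat m * Z.of_nat M) * PI / INR (M * p)) <> 0).
    { intros [|i] Hi. rewrite A0; apply cos_nz; auto.
      apply cos_nz. unfold p in *; lia. apply Cm. lia. }
    assert (E := sumT M q (Z.of_nat p * b) ltac:(lia) (cos_nz M _ HM Gpb) Cos).
    fold p in E.
    rewrite (rsum_first' p) in E by lia.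
    assert (T0 : T (M * p) (Z.of_nat p * b + Z.of_nat 0 * Z.of_nat M) = T M b).
    { unfold T. rewrite A0. auto. }
    rewrite T0 in E.
    apply (cl_ext S (- rsum (p - 1) (fun i => T (M * p) (Z.of_nat p * b + Z.of_nat (Datatypes.S i) * Z.of_nat M)))).
    apply cl_opp; auto. apply cl_rsum; auto. intros m Hm. apply H. apply Cm. lia.
    rewrite <- INR_IZR_INZ. lra.
Qed.


Lemma prime_odd p : prime p -> p <> 2%Z -> exists q, p = (2 * q + 1)%Z.
Proof.
  intros Hp H2. destruct Hp as [Hp1 Hp]. exists (p / 2)%Z.
  assert (Hm := Z.mod_pos_bound p 2 ltac:(lia)).
  assert (E := Z.div_mod p 2 ltac:(lia)).
  destruct (Z.eq_dec (p mod 2) 0) as [Z0|Z0]; [|lia].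
  exfalso. assert (R2 : rel_prime 2 p) by (apply Hp; lia).
  apply Zgcd_1_rel_prime in R2.
  assert (D : (2 | Z.gcd 2 p)%Z). { apply Z.gcd_greatest. apply Z.divide_refl. exists (p/2)%Z. lia. }
  rewrite R2 in D. apply Z.divide_1_r_nonneg in D; lia.
Qed.

Lemma step (S : R -> Prop) (M p : nat) : Closed S -> (3 <= M)%nat -> prime (Z.of_nat p) ->
  (forall b, Z.gcd b (Z.of_nat (M * p)) = 1%Z -> S (T (M * p) b)) ->
  forall a, Z.gcd a (Z.of_nat M) = 1%Z -> S (T M a).
Proof.
  intros HS HM Hp H.
  destruct (Nat.eq_dec p 2) as [E2|E2].
  - subst p.
    assert (Hm := Z.mod_pos_bound (Z.of_nat M) 2 ltac:(lia)).
    assert (E := Z.div_mod (Z.of_nat M) 2 ltac:(lia)).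
    destruct (Z.eq_dec (Z.of_nat M mod 2) 0) as [Z0|Z0].
    + set (L := (Z.of_nat M / 2)%Z) in *.
      assert (Hm' := Z.mod_pos_bound L 2 ltac:(lia)).
      assert (E' := Z.div_mod L 2 ltac:(lia)).
      destruct (Z.eq_dec (L mod 2) 0) as [Z1|Z1].
      * apply (stepB S M L (L / 2)); auto; lia.
      * apply (stepC S M L (L / 2)); auto; lia.
    + apply (stepA S M (Z.of_nat M / 2)); auto; lia.
  - assert (Hq : exists q, p = (2 * q + 1)%nat).
    { destruct (prime_odd _ Hp) as [q Hq]. lia. exists (Z.to_nat q). lia. }
    destruct Hq as [q Hq]. subst p.
    destruct (Zdivide_dec (Z.of_nat (2*q+1)) (Z.of_nat M)) as [[w Hw]|Hnd].
    + apply (stepD S M q w); auto. lia.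
    + apply (stepE S M q); auto.
Qed.

Lemma prime_divisor (n : Z) : (1 < n)%Z -> exists p, prime p /\ (p | n)%Z.
Proof.
  intros Hn. assert (G : forall k : nat, forall n, (1 < n <= Z.of_nat k)%Z -> exists p, prime p /\ (p | n)%Z).
  { induction k; intros m Hm. lia.
    destruct (prime_dec m) as [P|P]. exists m. split; auto. apply Z.divide_refl.
    destruct (not_prime_divide m ltac:(lia) P) as [r [Hr Hd]].
    destruct (IHk r ltac:(lia)) as [p [Pp Hpr]]. exists p. split; auto. eapply Z.divide_trans; eauto. }
  apply (G (Z.to_nat n)). lia.
Qed.

Lemma claim : forall d M, (1 <= d)%nat -> (3 <= M)%nat ->
  forall a, Z.gcd a (Z.of_nat M) = 1%Z -> InSpan (M * d) (T M a).
Proof.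
  intros d. induction d as [d IH] using lt_wf_ind. intros M Hd HM a Ha.
  destruct (Nat.eq_dec d 1) as [E|E].
  - subst d. rewrite Nat.mul_1_r. apply gen_T; auto.
  - destruct (prime_divisor (Z.of_nat d) ltac:(lia)) as [p [Pp [e He]]].
    assert (Hp1 : (1 < p)%Z) by (destruct Pp; auto).
    assert (He0 : (0 < e)%Z) by nia.
    set (p' := Z.to_nat p). set (e' := Z.to_nat e).
    assert (Hde : d = (p' * e')%nat) by (unfold p', e'; lia).
    apply (step (InSpan (M * d)) M p'); auto. apply InSpan_closed.
    unfold p'. rewrite Z2Nat.id by lia. auto.
    intros b Hb.
    replace (M * d)%nat with (M * p' * e')%nat by (rewrite Hde; ring).
    apply IH; auto. rewrite Hde. unfold p', e'. nia. unfold e'. lia. unfold p'. nia.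
Qed.


Theorem lemma9 (N k : nat) :
  (3 <= N)%nat -> (1 <= k)%nat -> (2 * k < N)%nat -> (1 < Nat.gcd k N)%nat ->
  exists c : nat -> Q,
    star_point N k =
    sum_f_R0 (fun j => if primitive_idx N j then Q2R (c j) * star_point N j else 0) N.
Proof.
  intros HN Hk H2 Hg.
  assert (Hd0 : Nat.gcd k N <> 0%nat) by lia.
  destruct (Nat.gcd_divide_l k N) as [a Ha].
  destruct (Nat.gcd_divide_r k N) as [M HM].
  assert (Hg1 := Nat.gcd_div_gcd k N (Nat.gcd k N) Hd0 eq_refl).
  set (d := Nat.gcd k N) in *.
  assert (Ea : (k / d)%nat = a) by (rewrite Ha; apply Nat.div_mul; auto).
  assert (EM : (N / d)%nat = M) by (rewrite HM; apply Nat.div_mul; auto).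
  rewrite Ea, EM in Hg1.
  assert (Ha1 : (1 <= a)%nat) by (destruct a; simpl in Ha; lia).
  assert (H2a : (2 * a < M)%nat).
  { apply (Nat.mul_lt_mono_pos_r d). lia. rewrite <- HM, <- Nat.mul_assoc, <- Ha. auto. }
  assert (HM3 : (3 <= M)%nat) by lia.
  assert (Hcop : Z.gcd (Z.of_nat a) (Z.of_nat M) = 1%Z) by (rewrite <- gcd_nat_Z, Hg1; auto).
  assert (Sp := claim d M ltac:(lia) HM3 (Z.of_nat a) Hcop).
  rewrite <- T_scale with (d := d) in Sp by lia.
  rewrite <- Nat2Z.inj_mul, <- Ha, <- HM, <- star_T in Sp.
  exact Sp.
Qed.
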